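(* Let $a\ge0$ and, for $m\ge0$, set $\Omega(a,m)=\{b\ge0:\ \sup_{t\in\mathbb{R}}|\cos(ta)-\cos(tb)|\le m\}$. (i) If $m<2$, then $\Omega(a,m)$ is finite, and every $b\in\Omega(a,m)$ has the form $b=\frac{pa}{q}$ where $p,q$ are odd positive integers with $\gcd(p,q)=1$, $1\le p\le\frac{\pi}{\arccos(m-1)}$ and $1\le q\le\frac{\pi}{\arccos(m-1)}$. (ii) If $m<\frac{8}{3\sqrt3}$, then $\Omega(a,m)=\{a\}$. *)

(* Defs.v *)
From Stdlib Require Export Reals Lra Lia List Arith.
Open Scope R_scope.

Definition Omega (a m : R) (b : R) : Prop :=
  0 <= b /\ forall t : R, Rabs (cos (t * a) - cos (t * b)) <= m.

(* Main.v *)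
Require Import Defs.
From Stdlib Require Import Reals List Arith.
From Stdlib Require Import Lra Lia ZArith Classical.
Open Scope R_scope.

Lemma cosZ x k : cos (x + 2 * IZR k * PI) = cos x.
Proof.
  destruct (Z_le_gt_dec 0 k) as [l|l].
  - rewrite <- (Z2Nat.id k l), <- INR_IZR_INZ. apply cos_period.
  - assert (Hk : k = (- Z.of_nat (Z.to_nat (-k)))%Z) by lia.
    rewrite Hk, opp_IZR, <- INR_IZR_INZ.
    set (n := Z.to_nat (-k)).
    rewrite <- (cos_period (x + 2 * - INR n * PI) n). f_equal; ring.
Qed.

Lemma cos_odd_nat k : cos (INR (2*k+1) * PI) = -1.
Proof.
  replace (INR (2*k+1) * PI) with (PI + 2 * INR k * PI)
    by (rewrite plus_INR, mult_INR; simpl; ring).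
  rewrite cos_period. apply cos_PI.
Qed.

Lemma cos_even_nat k : cos (INR (2*k) * PI) = 1.
Proof.
  replace (INR (2*k) * PI) with (0 + 2 * INR k * PI)
    by (rewrite mult_INR; simpl; ring).
  rewrite cos_period. apply cos_0.
Qed.

Definition G r x := exists n k : Z, x = IZR n * r + IZR k.

Lemma G_add r x y : G r x -> G r y -> G r (x + y).
Proof. intros [n [k H]] [n' [k' H']]. exists (n+n')%Z, (k+k')%Z.
  rewrite !plus_IZR; subst; ring. Qed.
Lemma G_opp r x : G r x -> G r (- x).
Proof. intros [n [k H]]. exists (-n)%Z, (-k)%Z. rewrite !opp_IZR; subst; ring. Qed.
Lemma G_mulZ r x z : G r x -> G r (IZR z * x).
Proof. intros [n [k H]]. exists (z*n)%Z, (z*k)%Z. rewrite !mult_IZR; subst; ring. Qed.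

Lemma dens r : (exists N M : Z, (0 < N)%Z /\ r * IZR N = IZR M) \/
  (forall y eps, 0 < eps -> exists x, G r x /\ Rabs (x - y) < eps).
Proof.
  set (E := fun x => G r x /\ 0 < x).
  set (F := fun y => E (- y)).
  destruct (completeness F) as [L [HL1 HL2]].
  - exists 0. intros y [_ Hy]. lra.
  - exists (-1). unfold F, E. split; [|lra]. exists 0%Z, 1%Z. simpl. ring.
  - set (g := - L).
    assert (Hlow : forall x, E x -> g <= x).
    { intros x Ex. assert (F (-x)) by (unfold F; rewrite Ropp_involutive; auto).
      specialize (HL1 _ H). unfold g; lra. }
    assert (Hgreat : forall c, g < c -> exists x, E x /\ x < c).
    { intros c Hc. destruct (classic (exists x, E x /\ x < c)) as [H|H]; auto.
      exfalso. assert (L <= -c).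
      { apply HL2. intros y Fy. destruct (Rlt_or_le (-c) y) as [h|h]; auto.
        exfalso. apply H. exists (-y). split; auto. lra. }
      unfold g in Hc; lra. }
    assert (g0 : 0 <= g).
    { destruct (Rlt_or_le g 0) as [h|h]; auto.
      destruct (Hgreat 0 h) as [x [[_ Hx] Hx']]. lra. }
    destruct (Req_dec g 0) as [Hg|Hg].
    + right. intros y eps He.
      destruct (Hgreat eps) as [x [[Gx xpos] xlt]]; [lra|].
      set (z := Int_part (y / x)). destruct (base_Int_part (y/x)) as [B1 B2].
      fold z in B1, B2.
      exists (IZR z * x). split; [apply G_mulZ; auto|].
      assert (Hy : y = (y/x) * x) by (field; lra).
      set (w := y / x) in *.
      assert (IZR z * x <= w * x) by nra.
      assert (w * x < IZR z * x + x) by nra.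
      unfold Rabs; destruct (Rcase_abs _); lra.
    + left. assert (gpos : 0 < g) by lra.
      destruct (Hgreat (2*g)) as [x1 [[G1 P1] L1]]; [lra|].
      assert (Hx1 : x1 = g).
      { destruct (Rle_lt_or_eq_dec g x1 (Hlow x1 (conj G1 P1))) as [h|h]; auto.
        exfalso. destruct (Hgreat x1 h) as [x2 [[G2 P2] L2]].
        assert (E (x1 - x2)) by (split; [apply G_add; auto; apply G_opp; auto | lra]).
        apply Hlow in H. assert (g <= x2) by (apply Hlow; split; auto). lra. }
      subst x1.
      assert (Hmult : forall w, G r w -> w = IZR (Int_part (w/g)) * g).
      { intros w Gw. set (z := Int_part (w / g)).
        destruct (base_Int_part (w/g)) as [B1 B2]. fold z in B1, B2.
        assert (Hy : w = (w/g) * g) by (field; lra).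
        set (u := w / g) in *.
        assert (IZR z * g <= u * g) by nra.
        assert (u * g < IZR z * g + g) by nra.
        destruct (Rle_lt_or_eq_dec 0 (w - IZR z * g)) as [h|h]; [lra| |lra].
        exfalso. assert (g <= w - IZR z * g); [|lra].
        apply Hlow. split; [|auto]. apply G_add; auto. apply G_opp, G_mulZ; auto. }
      assert (H1 := Hmult 1 ltac:(exists 0%Z, 1%Z; simpl; ring)).
      assert (Hr := Hmult r ltac:(exists 1%Z, 0%Z; simpl; ring)).
      set (N := Int_part (1/g)) in *. set (M := Int_part (r/g)) in *.
      exists N, M. split.
      * apply lt_IZR. destruct (Rlt_or_le 0 (IZR N)) as [h|h]; auto. nra.
      * rewrite Hr. rewrite Rmult_assoc, (Rmult_comm g), <- H1. ring.
Qed.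

Lemma cos_lb2 y : Rabs y <= PI/2 -> 1 - y*y/2 <= cos y.
Proof.
  intros H. destruct (cos_bound y 0) as [H1 _].
  - unfold Rabs in H; destruct (Rcase_abs y); lra.
  - unfold Rabs in H; destruct (Rcase_abs y); lra.
  - replace (1 - y*y/2) with (cos_approx y (2*0+1)); auto.
    unfold cos_approx, cos_term; simpl. field.
Qed.

Lemma rat_form a m b : 0 < a -> 0 <= m -> m < 2 -> Omega a m b ->
  exists p q : nat, (1<=p)%nat /\ (1<=q)%nat /\ Nat.gcd p q = 1%nat /\
    b = INR p * a / INR q /\
    forall x, Rabs (cos (INR q * x) - cos (INR p * x)) <= m.
Proof.
  intros Ha Hm0 Hm [Hb Ht].
  destruct (dens (b/a)) as [[N [M [HN HNM]]] | Hd].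
  2: { exfalso. set (eps := (2-m)/64).
    destruct (Hd (1/2) eps) as [x [[n [k Hx]] Hxe]]; [unfold eps; lra|].
    specialize (Ht (2 * IZR n * PI / a)).
    replace (2 * IZR n * PI / a * a) with (0 + 2 * IZR n * PI) in Ht by (field; lra).
    rewrite cosZ, cos_0 in Ht.
    set (e := x - 1/2) in *.
    replace (2 * IZR n * PI / a * b) with ((2*PI*e + PI) + 2 * IZR (-k) * PI) in Ht.
    2: { rewrite opp_IZR. unfold e. rewrite Hx. field. lra. }
    rewrite cosZ, neg_cos in Ht.
    assert (He : Rabs e < eps) by auto.
    assert (Hpi := PI_4). assert (Hpi0 := PI_RGT_0).
    assert (Hae : Rabs (2*PI*e) <= PI/2).
    { rewrite !Rabs_mult, (Rabs_right 2), (Rabs_right PI); try lra.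
      unfold eps in He. nra. }
    pose proof (cos_lb2 _ Hae) as Hc.
    assert (e*e <= eps*eps).
    { assert (Rabs e * Rabs e = e * e) by (unfold Rabs; destruct (Rcase_abs e); ring).
      assert (0 <= Rabs e) by apply Rabs_pos. nra. }
    assert (PI*PI <= 16) by nra.
    assert (0 <= e*e) by nra.
    assert (2*PI*e*(2*PI*e) <= 64*(e*e)).
    { replace (2*PI*e*(2*PI*e)) with (4*(PI*PI)*(e*e)) by ring. nra. }
    assert (eps*eps*64 < 2 - m) by (unfold eps; nra).
    rewrite Rabs_right in Ht; lra. }
  assert (HbNM : b * IZR N = a * IZR M).
  { rewrite <- HNM. field. lra. }
  assert (HNp : 0 < IZR N) by (apply IZR_lt; auto).
  assert (HM0 : (0 <= M)%Z).
  { apply le_IZR. rewrite <- HNM. apply Rmult_le_pos; [|lra].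
    apply Rmult_le_pos; [lra|]. left; apply Rinv_0_lt_compat; lra. }
  assert (HM1 : (0 < M)%Z).
  { destruct (Z.eq_dec M 0) as [h|h]; [|lia]. exfalso. subst M.
    assert (b * IZR N = 0) by (rewrite HbNM; simpl; ring).
    assert (b = 0) by (destruct (Rmult_integral _ _ H); lra). subst b.
    specialize (Ht (PI / a)). replace (PI / a * a) with PI in Ht by (field; lra).
    rewrite Rmult_0_r, cos_PI, cos_0, Rabs_left in Ht; lra. }
  set (p0 := Z.to_nat M). set (q0 := Z.to_nat N).
  assert (Ep : INR p0 = IZR M) by (unfold p0; rewrite INR_IZR_INZ, Z2Nat.id; [reflexivity|lia]).
  assert (Eq : INR q0 = IZR N) by (unfold q0; rewrite INR_IZR_INZ, Z2Nat.id; [reflexivity|lia]).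
  assert (Hp0 : (1 <= p0)%nat) by (unfold p0; lia).
  assert (Hq0 : (1 <= q0)%nat) by (unfold q0; lia).
  rewrite <- Ep, <- Eq in HbNM.
  clearbody p0 q0.
  remember (Nat.gcd p0 q0) as g.
  assert (Hg0 : g <> 0%nat).
  { intro h. subst g. apply Nat.gcd_eq_0 in h. lia. }
  pose proof (Nat.gcd_div_gcd p0 q0 g Hg0 Heqg) as Hgcd.
  destruct (Nat.gcd_divide_l p0 q0) as [c1 Hc1]. rewrite <- Heqg in Hc1.
  destruct (Nat.gcd_divide_r p0 q0) as [c2 Hc2]. rewrite <- Heqg in Hc2.
  rewrite Hc1, Hc2, !Nat.div_mul in Hgcd by auto.
  assert (c1p : (1 <= c1)%nat) by (destruct c1; simpl in Hc1; lia).
  assert (c2p : (1 <= c2)%nat) by (destruct c2; simpl in Hc2; lia).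
  assert (gp : 0 < INR g) by (apply lt_0_INR; lia).
  assert (c2r : 0 < INR c2) by (apply lt_0_INR; lia).
  assert (Hbe : b = INR c1 * a / INR c2).
  { rewrite Hc1, Hc2, !mult_INR in HbNM.
    assert (b * INR c2 = a * INR c1).
    { apply (Rmult_eq_reg_r (INR g)); [|lra]. rewrite !Rmult_assoc. auto. }
    apply (Rmult_eq_reg_r (INR c2)); [|lra]. rewrite H. field. lra. }
  exists c1, c2. repeat split; auto.
  intros x. specialize (Ht (INR c2 * x / a)).
  replace (INR c2 * x / a * a) with (INR c2 * x) in Ht by (field; lra).
  replace (INR c2 * x / a * b) with (INR c1 * x) in Ht; auto.
  rewrite Hbe. field. lra.
Qed.

Lemma parity p q m : (1<=p)%nat -> (1<=q)%nat -> Nat.gcd p q = 1%nat -> m < 2 ->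
  (forall x, Rabs (cos (INR q * x) - cos (INR p * x)) <= m) -> Nat.Odd p /\ Nat.Odd q.
Proof.
  intros Hp Hq Hg Hm H.
  destruct (Nat.Even_or_Odd p) as [[p' Ep]|Op];
  destruct (Nat.Even_or_Odd q) as [[q' Eq]|Oq]; auto.
  - exfalso. subst. rewrite Nat.gcd_mul_mono_l in Hg. lia.
  - exfalso. destruct Oq as [q' Eq]. specialize (H PI). subst p q.
    rewrite cos_odd_nat, cos_even_nat, Rabs_left in H; lra.
  - exfalso. destruct Op as [p' Ep]. specialize (H PI). subst p q.
    rewrite cos_odd_nat, cos_even_nat, Rabs_right in H; lra.
Qed.

Lemma key p q m : (1<=p)%nat -> (1<=q)%nat -> Nat.gcd p q = 1%nat ->
  Nat.Odd p -> Nat.Odd q ->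
  (forall x, Rabs (cos (INR q * x) - cos (INR p * x)) <= m) -> 1 + cos (PI / INR p) <= m.
Proof.
  intros Hp Hq Hg Op Oq H.
  assert (HB : exists U c, (U * q = 2 * c * p + 1)%nat).
  { destruct (Nat.gcd_bezout_pos q p) as [u [v Huv]]; [lia|].
    rewrite Nat.gcd_comm, Hg in Huv.
    destruct (Nat.Even_or_Odd v) as [[c Hc]|[c Hc]].
    - exists u, c. subst v. lia.
    - destruct Oq as [d Hd]. exists (u + p)%nat, (c + d + 1)%nat.
      rewrite Nat.mul_add_distr_r, Huv. subst v q. ring. }
  destruct HB as [U [c HU]].
  assert (OU : exists k, U = (2*k+1)%nat).
  { destruct (Nat.Even_or_Odd U) as [[k Hk]|[k Hk]]; eauto.
    exfalso. subst U. rewrite <- Nat.mul_assoc, <- Nat.mul_assoc in HU.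
    remember (k*q)%nat as X. remember (c*p)%nat as Y. lia. }
  destruct OU as [k Hk].
  assert (pr : 0 < INR p) by (apply lt_0_INR; lia).
  specialize (H (INR U * PI / INR p)).
  replace (INR p * (INR U * PI / INR p)) with (INR (2*k+1) * PI) in H
    by (rewrite <- Hk; field; lra).
  assert (E : INR q * INR U = 2 * INR c * INR p + 1)
    by (rewrite <- mult_INR, Nat.mul_comm, HU, plus_INR, !mult_INR; simpl; ring).
  replace (INR q * (INR U * PI / INR p)) with (PI / INR p + 2 * INR c * PI) in H.
  2: { replace (INR q * (INR U * PI / INR p)) with ((INR q * INR U) * PI / INR p)
         by (field; lra). rewrite E. field. lra. }
  rewrite cos_period, cos_odd_nat in H.
  pose proof (COS_bound (PI / INR p)).
  rewrite Rabs_right in H; lra.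
Qed.

Lemma bound p m : 0 <= m -> m < 2 -> (1 <= p)%nat -> 1 + cos (PI / INR p) <= m ->
  INR p <= PI / acos (m - 1).
Proof.
  intros H0 H2 Hp H.
  set (th := acos (m-1)).
  assert (Hc : cos th = m - 1) by (apply cos_acos; lra).
  destruct (acos_bound (m-1)) as [B1 B2]. fold th in B1, B2.
  assert (thp : 0 < th).
  { destruct (Rle_lt_or_eq_dec 0 th B1) as [h|h]; auto. rewrite <- h, cos_0 in Hc. lra. }
  assert (pr : 1 <= INR p) by (apply (le_INR 1); auto).
  assert (Hpp : 0 < PI / INR p <= PI).
  { assert (Hpi := PI_RGT_0).
    assert (0 < PI / INR p) by (apply Rdiv_lt_0_compat; lra).
    assert (PI / INR p * INR p = PI) by (field; lra). split; nra. }
  assert (Hth : th <= PI / INR p).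
  { apply cos_decr_0; lra. }
  apply (Rmult_le_reg_r th); [lra|].
  unfold Rdiv. rewrite Rmult_assoc, Rinv_l, Rmult_1_r by lra.
  apply (Rmult_le_compat_l (INR p)) in Hth; [|lra].
  replace (INR p * (PI / INR p)) with PI in Hth by (field; lra). lra.
Qed.

Lemma a0 m b : m < 2 -> Omega 0 m b -> b = 0.
Proof.
  intros Hm [Hb Ht]. destruct (Req_dec b 0) as [h|h]; auto. exfalso.
  specialize (Ht (PI / b)). rewrite Rmult_0_r in Ht.
  replace (PI / b * b) with PI in Ht by (field; auto).
  rewrite cos_PI, cos_0, Rabs_right in Ht; lra.
Qed.

Lemma struct_full a m b : 0 <= a -> 0 <= m -> m < 2 -> Omega a m b ->
  exists p q : nat,
    Nat.Odd p /\ Nat.Odd q /\ Nat.gcd p q = 1%nat /\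
    (1 <= p)%nat /\ INR p <= PI / acos (m - 1) /\
    (1 <= q)%nat /\ INR q <= PI / acos (m - 1) /\
    b = INR p * a / INR q /\
    (a = 0 \/ 1 + cos (PI / INR p) <= m /\ 1 + cos (PI / INR q) <= m /\
       forall x, Rabs (cos (INR q * x) - cos (INR p * x)) <= m).
Proof.
  intros Ha Hm0 Hm H.
  assert (B1 : INR 1 <= PI / acos (m - 1)).
  { apply bound; auto. simpl. rewrite Rdiv_1_r, cos_PI. lra. }
  destruct (Req_dec a 0) as [Ha0|Ha0].
  - subst a. apply a0 in H; auto. subst b.
    exists 1%nat, 1%nat. repeat split; auto.
    + exists 0%nat; auto.
    + exists 0%nat; auto.
    + simpl. field.
  - destruct (rat_form a m b) as [p [q [Hp [Hq [Hg [Hb Hx]]]]]]; auto; [lra|].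
    destruct (parity p q m) as [Op Oq]; auto.
    assert (Kp := key p q m Hp Hq Hg Op Oq Hx).
    assert (Kq : 1 + cos (PI / INR q) <= m).
    { apply (key q p m); auto. rewrite Nat.gcd_comm; auto.
      intros x. rewrite Rabs_minus_sym. auto. }
    exists p, q. repeat split; auto using bound.
Qed.

Lemma fin_list (P : R -> Prop) (L : list R) :
  (forall b, P b -> In b L) -> exists l, forall b, P b <-> In b l.
Proof.
  intros HL.
  assert (forall L, exists l, forall b, (P b /\ In b L) <-> In b l).
  { induction L0 as [|x L0 IH].
    - exists nil. simpl. tauto.
    - destruct IH as [l Hl]. destruct (classic (P x)) as [Px|Px].
      + exists (x :: l). intros b. simpl. rewrite <- Hl. split.
        * intros [Pb [<-|Hb]]; auto.
        * intros [<-|[Pb Hb]]; auto.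
      + exists l. intros b. simpl. rewrite <- Hl. split.
        * intros [Pb [<-|Hb]]; tauto.
        * tauto. }
  destruct (H L) as [l Hl]. exists l. intros b. rewrite <- Hl. split; auto. tauto.
Qed.

Lemma num1 : 8 / (3 * sqrt 3) < 1.57.
Proof.
  assert (H := sqrt_sqrt 3 ltac:(lra)). assert (H0 := sqrt_pos 3).
  set (s := sqrt 3) in *. assert (s > 1.7) by nra.
  assert (8 / (3*s) * (3*s) = 8) by (field; lra).
  assert (0 < 8 / (3*s)) by (apply Rdiv_lt_0_compat; lra). nra.
Qed.

Lemma num2 : 1 / sqrt 2 > 0.7.
Proof.
  assert (H := sqrt_sqrt 2 ltac:(lra)). assert (H0 := sqrt_pos 2).
  set (s := sqrt 2) in *. assert (s < 1.42) by nra. assert (s > 0) by nra.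
  assert (1 / s * s = 1) by (field; lra). nra.
Qed.

Lemma cos3 x : cos (3 * x) = 4 * (cos x * cos x * cos x) - 3 * cos x.
Proof.
  replace (3 * x) with (2 * x + x) by ring.
  rewrite cos_plus, cos_2a_cos, sin_2a.
  assert (Hs : sin x * sin x = 1 - cos x * cos x)
    by (pose proof (sin2_cos2 x) as h; unfold Rsqr in h; lra).
  replace (2 * sin x * cos x * sin x) with (2 * cos x * (sin x * sin x)) by ring.
  rewrite Hs. ring.
Qed.

Lemma three m : (forall x, Rabs (cos x - cos (3 * x)) <= m) -> 8 / (3 * sqrt 3) <= m.
Proof.
  intros H.
  assert (H3 := sqrt_sqrt 3 ltac:(lra)). assert (H0 := sqrt_pos 3).
  set (s := sqrt 3) in *. assert (s > 1.7) by nra.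
  set (c := 1 / s).
  assert (Hcc : c * c = 1/3).
  { unfold c. replace (1/s*(1/s)) with (1/(s*s)) by (field; lra). rewrite H3. lra. }
  assert (cpos : 0 < c) by (unfold c; apply Rdiv_lt_0_compat; lra).
  assert (c <= 1) by nra.
  specialize (H (acos c)). rewrite cos3, cos_acos in H by lra.
  replace (c - (4 * (c * c * c) - 3 * c)) with (8 / (3 * s)) in H.
  - rewrite Rabs_right in H; auto. left. apply Rdiv_lt_0_compat; lra.
  - replace (c * c * c) with (c * (c * c)) by ring. rewrite Hcc. unfold c. field. lra.
Qed.

Lemma big p m : (5 <= p)%nat -> 1 + cos (PI / INR p) <= m -> m < 8 / (3 * sqrt 3) -> False.
Proof.
  intros Hp H Hm.
  assert (pr : 5 <= INR p) by (apply (le_INR 5) in Hp; simpl in Hp; lra).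
  assert (Hpi := PI_RGT_0).
  assert (0 < PI / INR p) by (apply Rdiv_lt_0_compat; lra).
  assert (PI / INR p * INR p = PI) by (field; lra).
  assert (PI / INR p <= PI / 4) by nra.
  assert (Hc : cos (PI / 4) <= cos (PI / INR p)) by (apply cos_decr_1; lra).
  rewrite cos_PI4 in Hc. pose proof num1. pose proof num2. lra.
Qed.

Theorem lemma3p5 (a m : R) (ha : 0 <= a) (hm : 0 <= m) :
  (m < 2 ->
     (exists l : list R, forall b, Omega a m b <-> In b l) /\
     (forall b, Omega a m b ->
        exists p q : nat,
          Nat.Odd p /\ Nat.Odd q /\ Nat.gcd p q = 1%nat /\
          (1 <= p)%nat /\ INR p <= PI / acos (m - 1) /\
          (1 <= q)%nat /\ INR q <= PI / acos (m - 1) /\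
          b = INR p * a / INR q))
  /\
  (m < 8 / (3 * sqrt 3) -> forall b, Omega a m b <-> b = a).
Proof.
  split.
  - intros Hm. split.
    + set (X := PI / acos (m - 1)).
      set (K := Z.to_nat (up X)).
      assert (HX : 0 <= X).
      { unfold X. left. apply Rdiv_lt_0_compat. pose proof PI_RGT_0; lra.
        destruct (acos_bound (m-1)) as [B1 _].
        destruct (Rle_lt_or_eq_dec 0 _ B1) as [h|h]; auto.
        exfalso. pose proof (cos_acos (m-1) ltac:(lra)) as hc.
        rewrite <- h, cos_0 in hc. lra. }
      assert (HK : forall p, INR p <= X -> (p < K)%nat).
      { intros p Hp. destruct (archimed X) as [A1 _].
        assert (Hu : (0 <= up X)%Z) by (apply le_IZR; lra).
        apply INR_lt. unfold K. rewrite (INR_IZR_INZ (Z.to_nat _)), Z2Nat.id by auto. lra. }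
      apply (fin_list _ (map (fun pq => INR (fst pq) * a / INR (snd pq))
                             (list_prod (seq 0 K) (seq 0 K)))).
      intros b Hb.
      destruct (struct_full a m b) as [p [q [_ [_ [_ [_ [Hp [_ [Hq [Hbe _]]]]]]]]]]; auto.
      apply in_map_iff. exists (p, q). split; [simpl; auto|].
      apply in_prod; apply in_seq; split; try lia; apply HK; auto.
    + intros b Hb.
      destruct (struct_full a m b) as [p [q [O1 [O2 [G1 [H1 [H2 [H3 [H4 [H5 _]]]]]]]]]]; auto.
      exists p, q. repeat split; auto.
  - intros Hm b.
    assert (Hm2 : m < 2) by (pose proof num1; lra).
    split.
    + intros Hb.
      destruct (struct_full a m b) as [p [q [Op [Oq [Hg [Hp [_ [Hq [_ [Hbe Hor]]]]]]]]]]; auto.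
      destruct Hor as [Ha0|[Kp [Kq Hx]]].
      { subst a. rewrite Hbe. field. apply not_0_INR. lia. }
      assert (p5 : (p < 5)%nat).
      { destruct (Nat.lt_ge_cases p 5) as [h|h]; auto. exfalso. eapply big; eauto. }
      assert (q5 : (q < 5)%nat).
      { destruct (Nat.lt_ge_cases q 5) as [h|h]; auto. exfalso. eapply big; eauto. }
      destruct Op as [k Hk]. destruct Oq as [j Hj].
      assert (k = 0 \/ k = 1)%nat as [->| ->] by lia;
      assert (j = 0 \/ j = 1)%nat as [->| ->] by lia; simpl in Hk, Hj; subst p q.
      * rewrite Hbe. simpl. field.
      * exfalso. apply (Rlt_not_le _ _ Hm). apply three. intros x.
        specialize (Hx x). rewrite Rabs_minus_sym.
        replace (INR 1 * x) with x in Hx by (simpl; ring).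
        replace (INR 3 * x) with (3 * x) in Hx by (simpl; ring). auto.
      * exfalso. apply (Rlt_not_le _ _ Hm). apply three. intros x.
        specialize (Hx x).
        replace (INR 1 * x) with x in Hx by (simpl; ring).
        replace (INR 3 * x) with (3 * x) in Hx by (simpl; ring). auto.
      * simpl in Hg. discriminate.
    + intros ->. split; auto. intros t. unfold Rminus. rewrite Rplus_opp_r, Rabs_R0. auto.
Qed.
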